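(* Let $(A,* )$ be an involutive associative algebra over a field $\mathbb{K}$ of characteristic $0$. For $n\ge 1$ let $$iC^n_{\mathrm{Hoch}}(A,A)=\{f\in \mathrm{Hom}(A^{\otimes n},A)\mid f(a_1,\ldots,a_n)^*=(-1)^{\frac{(n-1)(n-2)}{2}} f(a_n^*,\ldots,a_1^* )\ \text{for all } a_i\in A\}.$$ If $m,n\ge 1$, $f\in iC^m_{\mathrm{Hoch}}(A,A)$ and $g\in iC^n_{\mathrm{Hoch}}(A,A)$, then the Gerstenhaber bracket $[f,g]$ lies in $iC^{m+n-1}_{\mathrm{Hoch}}(A,A)$.
   Context: An involutive associative algebra is an associative algebra $A$ with a linear map $*:A\to A$, $a\mapsto a^*$, such that $a^{**}=a$ and $(ab)^*=b^*a^*$ for all $a,b\in A$. For $f\in\mathrm{Hom}(A^{\otimes m},A)$, $g\in \mathrm{Hom}(A^{\otimes n},A)$ and $1\le i\le m$, let $(f\circ_i g)(a_1,\ldots,a_{m+n-1})=f(a_1,\ldots,a_{i-1},g(a_i,\ldots,a_{i+n-1}),a_{i+n},\ldots,a_{m+n-1})$. The Gerstenhaber bracket is $[f,g]=\sum_{i=1}^m(-1)^{(i-1)(n-1)}f\circ_i g-(-1)^{(m-1)(n-1)}\sum_{i=1}^n(-1)^{(i-1)(m-1)}g\circ_i f\in \mathrm{Hom}(A^{\otimes (m+n-1)},A)$. *)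

(* Defs.v *)
From HB Require Import structures.
From mathcomp Require Import all_boot all_order all_algebra.
Set Implicit Arguments. Unset Strict Implicit. Unset Printing Implicit Defensive.
Import GRing.Theory.
Local Open Scope ring_scope.

Section Hochschild.
Variables (K : fieldType) (A : lmodType K).

(* An element of Hom(A^{(x)n}, A): a map from n-tuples of arguments (indexed by 'I_n) to A. *)
Definition cochain (n : nat) := ('I_n -> A) -> A.

Definition upd n (a : 'I_n -> A) (i : 'I_n) (x : A) : 'I_n -> A :=
  fun j => if j == i then x else a j.

(* K-multilinearity, i.e. f factors through A^{(x)n}. *)
Definition multilinear n (f : cochain n) : Prop :=
  forall (i : 'I_n) (a : 'I_n -> A) (k : K) (x y : A),
    f (upd a i (k *: x + y)) = k *: f (upd a i x) + f (upd a i y).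

(* 0-based nat access to an argument family (default 0 out of range; never used
   out of range in the compositions below when N = m + n - 1). *)
Definition getarg N (a : 'I_N -> A) (k : nat) : A :=
  match insub k with Some j => a j | None => 0 end.

(* Partial composition f o_{i+1} g (i is 0-based, i < m), as an N-ary cochain with N = m+n-1:
   (f o_{i+1} g)(a_0..a_{N-1}) = f(a_0,..,a_{i-1}, g(a_i,..,a_{i+n-1}), a_{i+n},..,a_{N-1}). *)
Definition pcomp (N m n : nat) (f : cochain m) (i : nat) (g : cochain n) : cochain N :=
  fun a => f (fun j : 'I_m =>
    if (j < i)%N then getarg a j
    else if (j == i :> nat) then g (fun l : 'I_n => getarg a (i + l)%N)
    else getarg a (j + n - 1)%N).

Arguments pcomp : clear implicits.
Definition gbracket (m n : nat) (f : cochain m) (g : cochain n) : cochain (m + n - 1)%N :=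
  fun a =>
    \sum_(i < m) ((-1) ^+ (i * (n - 1))%N : K) *: pcomp (m + n - 1)%N m n f i g a
    - ((-1) ^+ ((m - 1) * (n - 1))%N : K) *:
        \sum_(i < n) ((-1) ^+ (i * (m - 1))%N : K) *: pcomp (m + n - 1)%N n m g i f a.

Variable star : A -> A.

Definition iC (n : nat) (f : cochain n) : Prop :=
  multilinear f /\
  forall a : 'I_n -> A,
    star (f a) = ((-1) ^+ ((n.-1 * n.-2) %/ 2)%N : K) *: f (fun j => star (a (rev_ord j))).

End Hochschild.

(* Main.v *)
Require Import Defs.
From Stdlib Require Import FunctionalExtensionality.
From HB Require Import structures.
From mathcomp Require Import all_boot all_order all_algebra zify.
Import GRing.Theory.
Local Open Scope ring_scope.
Set Implicit Arguments. Unset Strict Implicit.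

Definition eps (n : nat) := ((n.-1 * n.-2) %/ 2)%N.

Lemma epsC (n : nat) : eps n = 'C(n.-1, 2).
Proof. by rewrite /eps bin2 divn2. Qed.

Lemma epsD (m n : nat) : (1 <= m)%N -> (1 <= n)%N ->
  eps (m + n - 1) = (eps m + eps n + m.-1 * n.-1)%N.
Proof.
move=> hm hn; rewrite !epsC.
have -> : (m + n - 1).-1 = (m.-1 + n.-1)%N by lia.
rewrite -binomial.Vandermonde !big_ord_recr big_ord0 /=.
rewrite /=.
rewrite !subn0 !bin0 !bin1 /=.
rewrite add0n mul1n muln1; lia.
Qed.

Lemma getarg_lt (K : fieldType) (A : lmodType K) N (a : 'I_N -> A) k (h : (k < N)%N) :
  getarg a k = a (Ordinal h).
Proof. by rewrite /getarg insubT. Qed.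

Lemma getarg_upd (K : fieldType) (A : lmodType K) N (a : 'I_N -> A) (t : 'I_N) z k :
  getarg (upd a t z) k = if k == nat_of_ord t then z else getarg a k.
Proof.
rewrite /getarg /upd; case: insubP => [j _ <-|].
  by rewrite val_eqE.
move=> hk; case: eqP => // e; rewrite e ltn_ord in hk; by [].
Qed.

Lemma sign_lem (K : fieldType) (m n : nat) (i : nat) : (1 <= m)%N -> (1 <= n)%N -> (i < m)%N ->
  ((-1) ^+ ((m - i.+1) * (n - 1)) * ((-1) ^+ eps m * (-1) ^+ eps n) : K)
  = (-1) ^+ eps (m + n - 1) * (-1) ^+ (i * (n - 1)).
Proof.
move=> hm hn hi; rewrite -!exprD epsD // -signr_odd -[in RHS]signr_odd; congr (_ ^+ _).
have e1 : m.-1 = ((m - i.+1) + i)%N by lia.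
have e2 : n.-1 = (n - 1)%N by lia.
rewrite e1 e2 mulnDl.
set r := ((m - i.+1) * (n - 1))%N; set s := (i * (n - 1))%N.
have -> : (eps m + eps n + (r + s) + s = (r + (eps m + eps n)) + s.*2)%N by rewrite -addnn; lia.
by rewrite [in RHS]oddD odd_double addbF.
Qed.

Section S.
Variables (K : fieldType) (A : lmodType K) (star : A -> A).
Hypothesis star_lin : forall (k : K) (x y : A), star (k *: x + y) = k *: star x + star y.

Lemma star0 : star 0 = 0.
Proof. have := star_lin 1 0 0; rewrite !scale1r addr0 => e.
by move: e => /(congr1 (fun t => t - star 0)); rewrite subrr addrK => <-. Qed.
Lemma starD x y : star (x + y) = star x + star y.
Proof. by have := star_lin 1 x y; rewrite !scale1r. Qed.
Lemma starZ k x : star (k *: x) = k *: star x.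
Proof. by have := star_lin k x 0; rewrite !addr0 star0 addr0. Qed.
Lemma starB x y : star (x - y) = star x - star y.
Proof. by rewrite starD -scaleN1r starZ scaleN1r. Qed.
Lemma star_sum I (r : seq I) (P : pred I) (F : I -> A) :
  star (\sum_(i <- r | P i) F i) = \sum_(i <- r | P i) star (F i).
Proof. exact: (big_morph star starD star0). Qed.

Lemma ml_scale n (f : cochain A n) : multilinear f ->
  forall i a (k : K) x, f (upd a i (k *: x)) = k *: f (upd a i x).
Proof.
move=> hf i a k x.
have z : f (upd a i 0) = 0.
  have := hf i a 1 0 0; rewrite !scale1r addr0 => e.
  by move: e => /(congr1 (fun t => t - f (upd a i 0))); rewrite subrr addrK => <-.
by have := hf i a k x 0; rewrite !addr0 z addr0.
Qed.

Lemma upd_trick n (f : cochain A n) (hf : multilinear f) (F G : 'I_n -> A) j0 (k : K) :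
  (forall j, j != j0 -> G j = F j) -> G j0 = k *: F j0 -> f G = k *: f F.
Proof.
move=> h1 h2.
have -> : G = upd F j0 (k *: F j0).
  by apply: functional_extensionality => j; rewrite /upd; case: eqP => [->|/eqP]; [|apply: h1].
rewrite (ml_scale hf); congr (_ *: f _).
by apply: functional_extensionality => j; rewrite /upd; case: eqP => [->|].
Qed.

Lemma getarg_rev N (a : 'I_N -> A) k k' : (k < N)%N -> k' = (N - k.+1)%N ->
  star (getarg a k') = getarg (fun j => star (a (rev_ord j))) k.
Proof.
move=> hk ->; have hk' : (N - k.+1 < N)%N by lia.
rewrite (getarg_lt _ hk) (getarg_lt _ hk'); congr (star (a _)); exact: val_inj.
Qed.

Lemma pcomp_star N m n (f : cochain A m) (g : cochain A n)
  (hf : iC star f) (hg : iC star g) (hN : N = (m + n - 1)%N)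
  (hm : (1 <= m)%N) (hn : (1 <= n)%N) (i : 'I_m) (a : 'I_N -> A) :
  star (@Defs.pcomp K A N m n f i g a) = ((-1) ^+ eps m * (-1) ^+ eps n : K) *:
     @Defs.pcomp K A N m n f (rev_ord i) g (fun j => star (a (rev_ord j))).
Proof.
rewrite /Defs.pcomp (proj2 hf) -scalerA; congr (_ *: _).
set b := (fun j => star (a (rev_ord j))).
set gG := g (fun l : 'I_n => getarg b (rev_ord i + l)).
apply: (upd_trick (proj1 hf) (j0 := rev_ord i)) => [j hj|].
  rewrite -val_eqE /= in hj.
  have := ltn_ord j; have := ltn_ord i; move: hj; simpl.
  repeat case: ifP => ?; move=> *; try (exfalso; lia).
1,2: by apply: getarg_rev; lia.
rewrite rev_ordK ltnn eqxx (proj2 hg).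
rewrite ltnn eqxx /eps /gG; congr (_ *: g _).
apply: functional_extensionality => l.
have := ltn_ord l; have := ltn_ord i => *; apply: getarg_rev; rewrite /=; lia.
Qed.

Lemma ml_gen n (f : cochain A n) (hf : multilinear f) (Fz : A -> 'I_n -> A) j0 k x y :
  (forall z j, j != j0 -> Fz z j = Fz 0 j) -> Fz (k *: x + y) j0 = k *: Fz x j0 + Fz y j0 ->
  f (Fz (k *: x + y)) = k *: f (Fz x) + f (Fz y).
Proof.
move=> h1 h2.
have E : forall z, Fz z = upd (Fz 0) j0 (Fz z j0).
  move=> z; apply: functional_extensionality => j; rewrite /upd.
  by case: eqP => [->|/eqP hj]; last exact: h1.
by rewrite (E (k *: x + y)) h2 hf -!E.
Qed.

Lemma pcomp_ml N m n (f : cochain A m) (g : cochain A n)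
  (hf : multilinear f) (hg : multilinear g) (hN : N = (m + n - 1)%N)
  (hm : (1 <= m)%N) (hn : (1 <= n)%N) (i : 'I_m) (t : 'I_N) (a : 'I_N -> A) k x y :
  @Defs.pcomp K A N m n f i g (upd a t (k *: x + y)) =
  k *: @Defs.pcomp K A N m n f i g (upd a t x) + @Defs.pcomp K A N m n f i g (upd a t y).
Proof.
rewrite /Defs.pcomp.
set v := if (t < i)%N then nat_of_ord t else if (t < i + n)%N then nat_of_ord i else (t - n + 1)%N.
have hv : (v < m)%N.
  have := ltn_ord t; have := ltn_ord i; rewrite /v; case: (ltnP t i) => ?; [|case: (ltnP t (i+n)) => ?]; move=> *; lia.
apply: (ml_gen hf (Fz := fun z => (fun j : 'I_m =>
    if (j < i)%N then getarg (upd a t z) j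
    else if (j == i :> nat) then g (fun l : 'I_n => getarg (upd a t z) (i + l)%N)
    else getarg (upd a t z) (j + n - 1)%N)) (j0 := Ordinal hv)).
{ move=> z j hj0; have hj : nat_of_ord j != v by apply: contra hj0 => /eqP e; apply/eqP/val_inj.
  clear hj0 hv; have := ltn_ord t; have := ltn_ord i; have := ltn_ord j; move: hj; rewrite /v.
  clear v; case: (ltnP t i) => ?; [|case: (ltnP t (i+n)) => ?]; move=> hj *.
  all: case: ifP => h1; [rewrite !getarg_upd; case: (boolP (_ == _)) => // ?; try (exfalso; lia)|].
  all: case: ifP => h2; [congr (g _); apply: functional_extensionality => l;
         rewrite !getarg_upd; case: (boolP (_ == _)) => // ?; have ? := ltn_ord l; exfalso; lia|].
  all: rewrite !getarg_upd; case: (boolP (_ == _)) => // ?; exfalso; lia. }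
rewrite /=.
case: (ltnP t i) => h1; [|case: (ltnP t (i+n)) => h2].
- have ev : v = t by rewrite /v h1.
  by rewrite ev h1 !getarg_upd eqxx.
- have ev : v = i by rewrite /v ltnNge h1 /= h2.
  rewrite ev ltnn eqxx.
  have hl : (t - i < n)%N by lia.
  apply: (ml_gen hg (Fz := fun z => fun l : 'I_n => getarg (upd a t z) (i + l))
     (j0 := Ordinal hl)).
  + move=> z l hl0; have hl1 : nat_of_ord l != (t - i)%N.
      by apply: contra hl0 => /eqP e; apply/eqP/val_inj.
    rewrite !getarg_upd; case: (boolP (_ == _)) => // ?; exfalso; lia.
  + by rewrite /= !getarg_upd (_ : (i + (t - i))%N = t) ?eqxx //; lia.
- have ev : v = (t - n + 1)%N by rewrite /v ltnNge h1 /= ltnNge h2.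
  rewrite ev; have -> : (t - n + 1 < i)%N = false by lia.
  have -> : (t - n + 1 == i)%N = false by lia.
  by rewrite !getarg_upd (_ : (t - n + 1 + n - 1)%N = t) ?eqxx //; lia.
Qed.
End S.

Unset Implicit Arguments. Set Strict Implicit.

Theorem mainTheorem1
  (K : fieldType) (charK0 : [pchar K] =i pred0)
  (A : lmodType K) (mul : A -> A -> A)
  (mul_linl : forall (k : K) (x y z : A), mul (k *: x + y) z = k *: mul x z + mul y z)
  (mul_linr : forall (k : K) (x y z : A), mul z (k *: x + y) = k *: mul z x + mul z y)
  (mulA : forall x y z : A, mul x (mul y z) = mul (mul x y) z)
  (star : A -> A)
  (star_lin : forall (k : K) (x y : A), star (k *: x + y) = k *: star x + star y)
  (starK : forall x : A, star (star x) = x)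
  (star_mul : forall x y : A, star (mul x y) = mul (star y) (star x))
  (m n : nat) (hm : (1 <= m)%N) (hn : (1 <= n)%N)
  (f : cochain A m) (g : cochain A n)
  (hf : iC star f) (hg : iC star g) :
  iC star (gbracket f g).
Proof.
have hf1 := proj1 hf; have hg1 := proj1 hg.
have hN1 : (m + n - 1 = m + n - 1)%N by [].
have hN2 : (m + n - 1 = n + m - 1)%N by rewrite addnC.
split.
  move=> t a k x y; rewrite /gbracket.
  have E1 : forall p q (F : cochain A p) (G : cochain A q), multilinear F -> multilinear G ->
     (1 <= p)%N -> (1 <= q)%N -> (m + n - 1 = p + q - 1)%N ->
     \sum_(i < p) ((-1) ^+ (i * (q - 1)) : K) *: @Defs.pcomp K A (m + n - 1) p q F i G (upd a t (k *: x + y))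
     = k *: \sum_(i < p) ((-1) ^+ (i * (q - 1)) : K) *: @Defs.pcomp K A (m + n - 1) p q F i G (upd a t x)
       + \sum_(i < p) ((-1) ^+ (i * (q - 1)) : K) *: @Defs.pcomp K A (m + n - 1) p q F i G (upd a t y).
    move=> p q F G hF hG hp hq hpq; rewrite scaler_sumr -big_split; apply: eq_bigr => i _.
    by rewrite (pcomp_ml hF hG hpq hp hq) scalerDr !scalerA mulrC.
  rewrite (E1 _ _ f g) // (E1 _ _ g f) //.
  rewrite scalerBr scalerDr !scalerA (mulrC _ k) -!scalerA opprD addrACA.
  by [].
move=> a; rewrite /gbracket.
set b := (fun j => star (a (rev_ord j))).
have E1 : forall p q (F : cochain A p) (G : cochain A q), iC star F -> iC star G ->
     (1 <= p)%N -> (1 <= q)%N -> (m + n - 1 = p + q - 1)%N ->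
     star (\sum_(i < p) ((-1) ^+ (i * (q - 1)) : K) *: @Defs.pcomp K A (m + n - 1) p q F i G a)
     = ((-1) ^+ eps (p + q - 1) : K) *: \sum_(i < p) ((-1) ^+ (i * (q - 1)) : K) *: @Defs.pcomp K A (m + n - 1) p q F i G b.
  move=> p q F G hF hG hp hq hpq.
  rewrite (star_sum star_lin) (reindex_inj rev_ord_inj) scaler_sumr; apply: eq_bigr => i _.
  rewrite (starZ star_lin) (pcomp_star hF hG hpq hp hq) rev_ordK !scalerA.
  by congr (_ *: _); rewrite /= sign_lem.
rewrite (starB star_lin) (starZ star_lin) (E1 _ _ f g) // (E1 _ _ g f) // (addnC n m).
by rewrite scalerBr !scalerA mulrC.
Qed.
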